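(* Let $\Theta=\{1,2\}$, let $P_1,\dots,P_m$ be experiments, and let $(A,u)$ be a decision problem equivalent to $\bigoplus_{\ell=1}^k(A_\ell,u_\ell)$ for some decision problems $(A_1,u_1),\dots,(A_k,u_k)$. Let $\sigma:\mathbf Y\to\Delta(A_1\times\cdots\times A_k)$ be robustly optimal for $\bigoplus_{\ell=1}^k(A_\ell,u_\ell)$, and let $\sigma_\ell(\mathbf y)\in\Delta(A_\ell)$ denote the marginal of $\sigma(\mathbf y)$ on $A_\ell$. Then there exists $\sigma^*:\mathbf Y\to\Delta(A)$ such that $$u(\sigma^*(\mathbf y))\ge\sum_{\ell=1}^k u_\ell(\sigma_\ell(\mathbf y))\quad\text{for all }\mathbf y\in\mathbf Y,$$ and every $\sigma^*$ with this property is robustly optimal for $(A,u)$.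
   Context: $\Theta$ is a finite set of states. A decision problem is a pair $(A,u)$ with $A$ a finite nonempty action set and $u:\Theta\times A\to\mathbb{R}$; for $\alpha\in\Delta(A)$ write $u(\theta,\alpha)=\sum_a\alpha(a)u(\theta,a)$ and $u(\alpha)=(u(\theta,\alpha))_{\theta\in\Theta}\in\mathbb{R}^\Theta$; inequalities between vectors are componentwise. An experiment is a map $P:\Theta\to\Delta(Y)$ with $Y$ a finite signal set. Given experiments $P_j:\Theta\to\Delta(Y_j)$, $j=1,\dots,m$, let $\mathbf Y=Y_1\times\cdots\times Y_m$ and let $\mathcal P(P_1,\dots,P_m)$ be the set of experiments $P:\Theta\to\Delta(\mathbf Y)$ whose $j$-th marginal is $P_j(\cdot|\theta)$ for every $\theta$ and $j$. A strategy is a map $\sigma:\mathbf Y\to\Delta(A)$. Define $V(P_1,\dots,P_m;(A,u))=\max_{\sigma}\min_{P\in\mathcal P(P_1,\dots,P_m)}\sum_{\theta}\sum_{\mathbf y\in\mathbf Y}P(\mathbf y|\theta)u(\theta,\sigma(\mathbf y))$, and call a maximizing $\sigma$ robustly optimal for $(A,u)$. The composition $\bigoplus_{\ell=1}^k(A_\ell,u_\ell)$ is the decision problem with action set $A_1\times\cdots\times A_k$ and utility $u(\theta,(a_1,\dots,a_k))=\sum_{\ell}u_\ell(\theta,a_\ell)$. For a decision problem let $\mathcal H(A,u)=\mathrm{co}\{u(\cdot,a):a\in A\}-\mathbb{R}_+^{\Theta}$ (Minkowski difference). Two decision problems $(A,u)$, $(A',u')$ are equivalent if $\mathcal H(A,u)=\mathcal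 H(A',u')$. *)

(* Defs.v *)
From HB Require Import structures.
From mathcomp Require Import all_boot all_order all_algebra.
From mathcomp Require Import boolp classical_sets reals.
Set Implicit Arguments. Unset Strict Implicit. Unset Printing Implicit Defensive.
Import Order.TTheory GRing.Theory Num.Theory.
Local Open Scope ring_scope.
Local Open Scope classical_set_scope.

Definition is_dist (R : realType) (X : finType) (p : {ffun X -> R}) : Prop :=
  (forall x, 0 <= p x) /\ \sum_(x : X) p x = 1.

Definition expu (R : realType) (Theta A : finType) (u : Theta -> A -> R)
  (theta : Theta) (alpha : {ffun A -> R}) : R :=
  \sum_(a : A) alpha a * u theta a.

Definition is_experiment (R : realType) (Theta Y : finType)
  (P : Theta -> {ffun Y -> R}) : Prop := forall theta, is_dist (P theta).

Definition signals (m : nat) (Y : 'I_m -> finType) : finType :=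
  {dffun forall j : 'I_m, Y j}.

Definition couplings (R : realType) (Theta : finType) (m : nat)
  (Y : 'I_m -> finType) (Ps : forall j : 'I_m, Theta -> {ffun Y j -> R})
  : set (Theta -> {ffun signals Y -> R}) :=
  [set P | is_experiment P /\
     forall (theta : Theta) (j : 'I_m) (yj : Y j),
       \sum_(y : signals Y | y j == yj) P theta y = Ps j theta yj].

Definition is_strategy (R : realType) (Sg A : finType)
  (sigma : Sg -> {ffun A -> R}) : Prop := forall y, is_dist (sigma y).

Definition payoff (R : realType) (Theta Sg A : finType) (u : Theta -> A -> R)
  (P : Theta -> {ffun Sg -> R}) (sigma : Sg -> {ffun A -> R}) : R :=
  \sum_(theta : Theta) \sum_(y : Sg) P theta y * expu u theta (sigma y).

(* min over P in calP of the payoff (an inf, which is attained) *)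
Definition worst_value (R : realType) (Theta : finType) (m : nat)
  (Y : 'I_m -> finType) (Ps : forall j : 'I_m, Theta -> {ffun Y j -> R})
  (A : finType) (u : Theta -> A -> R) (sigma : signals Y -> {ffun A -> R}) : R :=
  inf [set payoff u P sigma | P in couplings Ps].

Definition robustly_optimal (R : realType) (Theta : finType) (m : nat)
  (Y : 'I_m -> finType) (Ps : forall j : 'I_m, Theta -> {ffun Y j -> R})
  (A : finType) (u : Theta -> A -> R) (sigma : signals Y -> {ffun A -> R}) : Prop :=
  is_strategy sigma /\
  forall sigma' : signals Y -> {ffun A -> R}, is_strategy sigma' ->
    worst_value Ps u sigma' <= worst_value Ps u sigma.

(* H(A,u) = co{u(.,a)} - R_+^Theta *)
Definition inH (R : realType) (Theta A : finType) (u : Theta -> A -> R)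
  (x : Theta -> R) : Prop :=
  exists alpha : {ffun A -> R}, is_dist alpha /\
    forall theta, x theta <= expu u theta alpha.

Definition equivalent_dp (R : realType) (Theta A A' : finType)
  (u : Theta -> A -> R) (u' : Theta -> A' -> R) : Prop :=
  forall x : Theta -> R, inH u x <-> inH u' x.

Definition prod_actions (k : nat) (Al : 'I_k -> finType) : finType :=
  {dffun forall l : 'I_k, Al l}.

Definition comp_u (R : realType) (Theta : finType) (k : nat)
  (Al : 'I_k -> finType) (ul : forall l : 'I_k, Theta -> Al l -> R)
  : Theta -> prod_actions Al -> R :=
  fun theta a => \sum_(l : 'I_k) ul l theta (a l).

Definition marg (R : realType) (k : nat) (Al : 'I_k -> finType)
  (alpha : {ffun prod_actions Al -> R}) (l : 'I_k) : {ffun Al l -> R} :=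
  [ffun al : Al l => \sum_(a : prod_actions Al | a l == al) alpha a].

(* Main.v *)
Require Import Defs.
From HB Require Import structures.
From mathcomp Require Import all_boot all_order all_algebra.
From mathcomp Require Import boolp classical_sets reals.
Import Order.TTheory GRing.Theory Num.Theory.
Local Open Scope ring_scope.

Section Aux.
Variable R : realType.
Local Open Scope classical_set_scope.

Lemma inf_mono (T : Type) (C : set T) (f g : T -> R) :
  (C !=set0 -> has_lbound [set f x | x in C]) ->
  (forall x, C x -> f x <= g x) ->
  inf [set f x | x in C] <= inf [set g x | x in C].
Proof.
move=> lb fg; case: (pselect (C !=set0)) => [ne|e].
  have hl := lb ne; apply: lb_le_inf.
    by case: ne => x Cx; exists (g x); exists x.
  move=> _ [x Cx <-]; apply: le_trans (fg x Cx).
  by apply: (ge_inf hl); exists x.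
have -> : C = set0 by apply/seteqP; split=> x // Cx; exfalso; apply: e; exists x.
by rewrite !image_set0.
Qed.

Lemma le_sum_single (X : finType) (F : X -> R) (x : X) :
  (forall z, 0 <= F z) -> F x <= \sum_z F z.
Proof.
move=> F0; rewrite (bigD1 x) //=; rewrite lerDl; exact: sumr_ge0.
Qed.

Lemma expu_lb (Theta A : finType) (u : Theta -> A -> R) theta
  (alpha : {ffun A -> R}) c :
  is_dist alpha -> (forall a, c <= u theta a) -> c <= expu u theta alpha.
Proof.
move=> [a0 a1] hc; rewrite /expu.
have -> : c = \sum_a alpha a * c by rewrite -mulr_suml a1 mul1r.
by apply: ler_sum => a _; apply: ler_wpM2l.
Qed.

Lemma payoff_lb (Theta : finType) (m : nat) (Y : 'I_m -> finType)
  (Ps : forall j : 'I_m, Theta -> {ffun Y j -> R})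
  (A : finType) (u : Theta -> A -> R) (s : signals Y -> {ffun A -> R}) :
  is_strategy s -> has_lbound [set payoff u P s | P in couplings Ps].
Proof.
move=> hs.
exists (\sum_theta - \sum_a `|u theta a|) => _ [P [HP _] <-].
rewrite /payoff; apply: ler_sum => theta _.
have [P0 P1] := HP theta.
have -> : - \sum_a `|u theta a| = \sum_y P theta y * (- \sum_a `|u theta a|).
  by rewrite -mulr_suml P1 mul1r.
apply: ler_sum => y _; apply: ler_wpM2l => //.
apply: expu_lb => // a; rewrite lerNl.
have := @le_sum_single _ (fun a => `|u theta a|) a (fun z => normr_ge0 _).
apply: le_trans; by rewrite -normrN ler_norm.
Qed.

Lemma payoff_mono (Theta Sg A A' : finType) (u : Theta -> A -> R)
  (v : Theta -> A' -> R) (P : Theta -> {ffun Sg -> R}) s1 s2 :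
  is_experiment P ->
  (forall theta y, expu u theta (s1 y) <= expu v theta (s2 y)) ->
  payoff u P s1 <= payoff v P s2.
Proof.
move=> HP h; apply: ler_sum => theta _; apply: ler_sum => y _.
by apply: ler_wpM2l => //; case: (HP theta).
Qed.

Lemma wv_mono (Theta : finType) (m : nat) (Y : 'I_m -> finType)
  (Ps : forall j : 'I_m, Theta -> {ffun Y j -> R})
  (A A' : finType) (u : Theta -> A -> R) (v : Theta -> A' -> R) s1 s2 :
  is_strategy s1 ->
  (forall theta y, expu u theta (s1 y) <= expu v theta (s2 y)) ->
  worst_value Ps u s1 <= worst_value Ps v s2.
Proof.
move=> hs h; apply: inf_mono => [_|P [HP _]]; first exact: payoff_lb.
exact: payoff_mono.
Qed.

Lemma expu_comp (Theta : finType) (k : nat) (Al : 'I_k -> finType)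
  (ul : forall l : 'I_k, Theta -> Al l -> R) theta alpha :
  expu (comp_u ul) theta alpha =
  \sum_(l : 'I_k) expu (ul l) theta (marg alpha l).
Proof.
rewrite /expu /comp_u.
under eq_bigr do rewrite mulr_sumr.
rewrite exchange_big /=; apply: eq_bigr => l _.
under [RHS]eq_bigr do rewrite ffunE mulr_suml.
rewrite (partition_big (fun a : prod_actions Al => a l) predT) //=.
apply: eq_bigr => al _; apply: eq_bigr => a /eqP <-; done.
Qed.

End Aux.

Theorem lemma5 (R : realType) (m : nat) (Y : 'I_m -> finType)
  (Ps : forall j : 'I_m, 'I_2 -> {ffun Y j -> R})
  (HPs : forall j : 'I_m, is_experiment (Ps j))
  (A : finType) (u : 'I_2 -> A -> R) (HA : (0 < #|A|)%N)
  (k : nat) (Al : 'I_k -> finType) (HAl : forall l : 'I_k, (0 < #|Al l|)%N)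
  (ul : forall l : 'I_k, 'I_2 -> Al l -> R)
  (Heq : equivalent_dp u (comp_u ul))
  (sigma : signals Y -> {ffun prod_actions Al -> R})
  (Hsigma : robustly_optimal Ps (comp_u ul) sigma) :
  (exists sigma_star : signals Y -> {ffun A -> R},
     is_strategy sigma_star /\
     forall (y : signals Y) (theta : 'I_2),
       \sum_(l : 'I_k) expu (ul l) theta (marg (sigma y) l)
         <= expu u theta (sigma_star y)) /\
  (forall sigma_star : signals Y -> {ffun A -> R},
     is_strategy sigma_star ->
     (forall (y : signals Y) (theta : 'I_2),
        \sum_(l : 'I_k) expu (ul l) theta (marg (sigma y) l)
          <= expu u theta (sigma_star y)) ->
     robustly_optimal Ps u sigma_star).
Proof.
case: Hsigma => Hs Hopt; split.
  have : forall y, exists alpha : {ffun A -> R}, is_dist alpha /\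
      forall theta, expu (comp_u ul) theta (sigma y) <= expu u theta alpha.
    move=> y; apply/(Heq (fun theta => expu (comp_u ul) theta (sigma y))).
    by exists (sigma y); split.
  case/choice => ss hss; exists ss; split; first by move=> y; case: (hss y).
  by move=> y theta; rewrite -expu_comp; case: (hss y).
move=> ss hss hle; split => // s' hs'.
have : forall y, exists beta : {ffun prod_actions Al -> R}, is_dist beta /\
    forall theta, expu u theta (s' y) <= expu (comp_u ul) theta beta.
  move=> y; apply/(Heq (fun theta => expu u theta (s' y))).
  by exists (s' y); split.
case/choice => bb hbb.
have hb : is_strategy bb by move=> y; case: (hbb y).
apply: (le_trans (@wv_mono _ _ _ _ Ps _ _ u (comp_u ul) s' bb hs' _)).
  by move=> theta y; case: (hbb y).
apply: (le_trans (Hopt _ hb)).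
apply: wv_mono => // theta y; rewrite expu_comp; exact: hle.
Qed.
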